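(* Let $G$ be a bridgeless cubic graph and let $J_1,J_2,J_3$ be three joins of $G$ such that the weak core of $G$ with respect to $J_1,J_2,J_3$ is a weak $k$-core, i.e. $k=|E_0|+\frac{3}{2}\sum_{i=1}^3 n(J_i)$. Then $$\sum_{i=1}^3|\overline{J_i}|_{odd}\leq 2k.$$
   Context: A join of a graph $H$ is a set $J\subseteq E(H)$ such that every vertex has degree of the same parity in $H$ and in the spanning subgraph $(V(H),J)$. In a cubic graph every vertex has degree $1$ or $3$ in a join $J$; a vertex of degree $3$ in $J$ is a $J$-vertex and $n(J)$ is the number of $J$-vertices. Given three joins $J_1,J_2,J_3$, $E_i$ ($i=0,\dots,3$) is the set of edges lying in precisely $i$ of them; the weak core with respect to them is $G[E_0\cup E_2\cup E_3]$, and it is called a weak $l$-core (more precisely a $k'$-weak $l$-core, where $k'$ is the number of $J_i$ that are not 1-factors) with $l=|E_0|+\frac{3}{2}\sum_{i=1}^3 n(J_i)$. $\overline{J}$ denotes the complement of $J$, i.e. the spanning subgraph $(V(G),E(G)\setminus J)$, and $|H|_{odd}$ denotes the number of components of $H$ with an odd number of vertices. *)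

(* Defs.v *)
(* Finite multigraphs: vertex type V, edge type E, each edge
   e has two ends (src e) and (tgt e).  Parallel edges allowed; a loop
   contributes 2 to the degree of its vertex. *)
From mathcomp Require Import all_boot.
Set Implicit Arguments. Unset Strict Implicit. Unset Printing Implicit Defensive.

Section Graphs.
Variables (V E : finType) (src tgt : E -> V).

Definition deg (F : {set E}) (v : V) : nat :=
  #|[set e in F | src e == v]| + #|[set e in F | tgt e == v]|.

Definition cubic : Prop := forall v, deg [set: E] v = 3.

Definition adj (F : {set E}) : rel V :=
  fun x y => [exists e in F, ((src e == x) && (tgt e == y)) ||
                             ((src e == y) && (tgt e == x))].

Definition bridgeless : Prop :=
  forall e : E, connect (adj ([set: E] :\ e)) (src e) (tgt e).

Definition is_join (J : {set E}) : Prop :=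
  forall v, odd (deg J v) = odd (deg [set: E] v).

Definition nJ (J : {set E}) : nat := #|[set v | deg J v == 3]|.

Definition compl (J : {set E}) : {set E} := ~: J.

Definition components (F : {set E}) : {set {set V}} :=
  [set [set y | connect (adj F) x y] | x : V].

Definition odd_comps (F : {set E}) : nat :=
  #|[set C in components F | odd #|C|]|.

Definition Ei (J1 J2 J3 : {set E}) (i : nat) : {set E} :=
  [set e | (e \in J1) + (e \in J2) + (e \in J3) == i].

End Graphs.

(* Main.v *)
Require Import Defs.
From mathcomp Require Import all_boot zify.
Set Implicit Arguments. Unset Strict Implicit. Unset Printing Implicit Defensive.

Section G.
Variables (V E : finType) (src tgt : E -> V).

Definition w (e : E) (v : V) : nat := (src e == v) + (tgt e == v).
Local Notation d := (deg src tgt).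

Lemma card_sum (F : {set E}) (P : pred E) :
  #|[set e in F | P e]| = \sum_e (e \in F) * P e.
Proof.
rewrite -sum1_card big_mkcond /=; apply eq_bigr => e _; rewrite inE.
by case: (e \in F); case: (P e).
Qed.

Lemma degE F v : d F v = \sum_e (e \in F) * w e v.
Proof.
rewrite /deg (card_sum F (fun e => src e == v)) (card_sum F (fun e => tgt e == v)).
by rewrite -big_split; apply eq_bigr => e _; rewrite /w mulnDr.
Qed.

Lemma deg_ptw (F G H : {set E}) v :
  (forall e, (e \in F) + (e \in G) = (e \in H)) -> d F v + d G v = d H v.
Proof.
move=> HP; rewrite !degE -big_split; apply eq_bigr => e _.
by rewrite -HP mulnDl.
Qed.

Lemma deg_sub (F G : {set E}) v : F \subset G -> d F v <= d G v.
Proof.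
move=> /subsetP sFG; rewrite !degE; apply leq_sum => e _.
case He: (e \in F); last by [].
by rewrite (sFG _ He).
Qed.

Lemma sum_ge_term (I : finType) (P : pred I) (f : I -> nat) j :
  P j -> f j <= \sum_(i | P i) f i.
Proof. by move=> Pj; rewrite (bigD1 j) //= leq_addr. Qed.

Lemma sum_ge_two (I : finType) (P : pred I) (f : I -> nat) j k :
  P j -> P k -> j != k -> f j + f k <= \sum_(i | P i) f i.
Proof.
move=> Pj Pk njk; rewrite (bigD1 j) //= leq_add2l.
by apply: sum_ge_term; rewrite Pk eq_sym njk.
Qed.

Lemma sum_in_K (K : {set V}) (F : {set E}) :
  \sum_(v in K) d F v = \sum_e (e \in F) * ((src e \in K) + (tgt e \in K)).
Proof.
under eq_bigr => v _ do rewrite degE.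
rewrite exchange_big /=; apply eq_bigr => e _.
rewrite -big_distrr /=; congr (_ * _).
rewrite big_split /=; congr (_ + _).
  rewrite (big_mkcond (fun v => v \in K)) /= (bigD1 (src e)) //= big1 ?addn0.
    by case: (src e \in K) => //=; case: eqP.
  by move=> v /negbTE; rewrite eq_sym => ->; case: (v \in K).
rewrite (big_mkcond (fun v => v \in K)) /= (bigD1 (tgt e)) //= big1 ?addn0.
  by case: (tgt e \in K) => //=; case: eqP.
by move=> v /negbTE; rewrite eq_sym => ->; case: (v \in K).
Qed.


Lemma adj_sym F : symmetric (adj src tgt F).
Proof.
move=> x y; rewrite /adj; apply/existsP/existsP => -[e He]; exists e; move: He;
by rewrite [X in _ && X]orbC.
Qed.

Lemma comp_mem F K y : K \in components src tgt F -> y \in K ->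
  K = [set z | connect (adj src tgt F) y z].
Proof.
move=> /imsetP[x _ ->]; rewrite inE => cxy; apply/setP => z; rewrite !inE.
apply/idP/idP => H; last exact: connect_trans cxy H.
by apply: connect_trans _ H; rewrite (sym_connect_sym (@adj_sym F)).
Qed.

Lemma comp_edge F K e : K \in components src tgt F -> e \in F ->
  (src e \in K) = (tgt e \in K).
Proof.
move=> /imsetP[x _ ->] He; rewrite !inE.
have a : adj src tgt F (src e) (tgt e).
  by apply/existsP; exists e; rewrite He !eqxx.
apply/idP/idP => H; apply: connect_trans H _; apply: connect1 => //.
by rewrite adj_sym.
Qed.

Lemma noloop : cubic src tgt -> bridgeless src tgt -> forall e, src e != tgt e.
Proof.
move=> cub br e; apply/negP => /eqP loop.
set u := src e.
have H3 : \sum_f w f u = 3.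
  by rewrite -(cub u) degE; apply eq_bigr => f _; rewrite in_setT mul1n.
have we : w e u = 2 by rewrite /w /u -loop eqxx.
rewrite (bigD1 e) //= we in H3.
have Hs : \sum_(f | f != e) w f u = 1 by lia.
case: (pickP (fun f => (f != e) && (0 < w f u))) => [f /andP[nfe wf] | none];
  last first.
  rewrite big1 in Hs => // f nf; have := none f; rewrite /= nf /=.
  by case: (w f u).
rewrite (bigD1 f) //= in Hs.
have wf1 : w f u = 1 by lia.
have rest : forall g, g != e -> g != f -> w g u = 0.
  move=> g ge gf.
  have := @sum_ge_term _ (fun i => (i != e) && (i != f)) (fun g => w g u) g.
  rewrite /= ge gf => /(_ isT); lia.
have cl : closed (adj src tgt (setT :\ f)) (pred1 u).
  move=> x y /existsP[g /andP[gin Hg]]; rewrite !inE in gin.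
  move/andP: gin => [gf _].
  rewrite /in_mem /=.
  case: (eqVneq g e) => [ge|ge].
    subst g; by case/orP: Hg => /andP[/eqP <- /eqP <-]; rewrite -loop.
  have := rest g ge gf; rewrite /w.
  by case/orP: Hg => /andP[/eqP <- /eqP <-];
     case: (src g == u); case: (tgt g == u).
have := closed_connect cl (br f); rewrite !inE.
move: wf1; rewrite /w.
by case: (src f == u); case: (tgt f == u).
Qed.

Lemma deg13 J v : cubic src tgt -> is_join src tgt J -> d J v = 1 \/ d J v = 3.
Proof.
move=> cub isj.
have le := deg_sub v (subsetT J); rewrite cub in le.
have od := isj v; rewrite cub in od.
by move: (d J v) le od => [|[|[|[|n]]]] //= _ _; [left|right].
Qed.

Definition tight (A B C : {set E}) (e : E) : bool :=
  ((d (A :&: B) (src e) == 1) && (d (A :&: C) (src e) == 0)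
   && (d ((B :&: C) :\: A) (src e) == 0) && (d (A :&: B) (tgt e) == 0)
   && (d (A :&: C) (tgt e) == 1) && (d ((B :&: C) :\: A) (tgt e) == 0))
  || ((d (A :&: B) (src e) == 0) && (d (A :&: C) (src e) == 1)
   && (d ((B :&: C) :\: A) (src e) == 0) && (d (A :&: B) (tgt e) == 1)
   && (d (A :&: C) (tgt e) == 0) && (d ((B :&: C) :\: A) (tgt e) == 0)).

Definition omega A B C e := if tight A B C e then 2 else 1.

Lemma tightP A B C e : tight A B C e ->
  (d (A :&: B) (src e) = 1 /\ d (A :&: C) (src e) = 0
   /\ d ((B :&: C) :\: A) (src e) = 0 /\ d (A :&: B) (tgt e) = 0
   /\ d (A :&: C) (tgt e) = 1 /\ d ((B :&: C) :\: A) (tgt e) = 0)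
  \/ (d (A :&: B) (src e) = 0 /\ d (A :&: C) (src e) = 1
   /\ d ((B :&: C) :\: A) (src e) = 0 /\ d (A :&: B) (tgt e) = 1
   /\ d (A :&: C) (tgt e) = 0 /\ d ((B :&: C) :\: A) (tgt e) = 0).
Proof.
rewrite /tight; case/orP =>
  /andP[/andP[/andP[/andP[/andP[/eqP ? /eqP ?] /eqP ?] /eqP ?] /eqP ?] /eqP ?];
  [left|right]; do !split => //.
Qed.

Lemma tight_once (J1 J2 J3 : {set E}) e :
  tight J1 J2 J3 e + tight J2 J1 J3 e + tight J3 J1 J2 e <= 1.
Proof.
have dec : forall v,
  [/\ d (J1 :&: J2) v = d ((J1 :&: J2) :\: J3) v + d (J1 :&: J2 :&: J3) v,
      d (J1 :&: J3) v = d ((J1 :&: J3) :\: J2) v + d (J1 :&: J2 :&: J3) v &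
      d (J2 :&: J3) v = d ((J2 :&: J3) :\: J1) v + d (J1 :&: J2 :&: J3) v].
  move=> v; split; symmetry; apply deg_ptw => f; rewrite !inE;
  by case: (f \in J1); case: (f \in J2); case: (f \in J3).
case: (dec (src e)) (dec (tgt e)) => [? ? ?] [? ? ?].
case T1: (tight J1 J2 J3 e); case T2: (tight J2 J1 J3 e);
  case T3: (tight J3 J1 J2 e) => //=; exfalso;
  move: T1 T2 T3 => /= T1 T2 T3;
  (try move/tightP: T1 => T1); (try move/tightP: T2 => T2);
  (try move/tightP: T3 => T3);
  rewrite ?(setIC J2 J1) ?(setIC J3 J1) ?(setIC J3 J2) in T1 T2 T3; lia.
Qed.

Lemma comp_bound (A B C : {set E}) K :
  cubic src tgt -> (forall e, src e != tgt e) ->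
  K \in components src tgt (compl A) -> odd #|K| ->
  (forall v, v \in K -> [/\ d A v = 1, d B v = 1 & d C v = 1]) ->
  2 <= \sum_(e | (e \in Ei A B C 0) && (src e \in K)) omega A B C e.
Proof.
move=> cub nl HK oK Hdeg.
have E0A : forall e, e \in Ei A B C 0 -> e \in compl A.
  by move=> e; rewrite /Ei /compl !inE; case: (e \in A).
set X := [set e in Ei A B C 0 | src e \in K].
have sumE0 : \sum_(v in K) d (Ei A B C 0) v = 2 * #|X|.
  rewrite sum_in_K /X card_sum big_distrr /=; apply eq_bigr => e _.
  case He: (e \in Ei A B C 0) => /=; last by [].
  rewrite -(comp_edge HK (E0A e He)); by case: (src e \in K).
have par : forall Y, (forall v, v \in K -> d Y v = 1) ->
    odd (\sum_(v in K) d (A :&: Y) v).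
  move=> Y HY.
  have s1 : \sum_(v in K) d Y v = #|K|.
    by rewrite -sum1_card; apply eq_bigr => v vK; exact: HY.
  have s2 : \sum_(v in K) d Y v =
      \sum_(v in K) d (A :&: Y) v + \sum_(v in K) d (Y :\: A) v.
    rewrite -big_split; apply eq_bigr => v _; symmetry; apply deg_ptw => e.
    by rewrite !inE; case: (e \in A); case: (e \in Y).
  have s3 : \sum_(v in K) d (Y :\: A) v =
      2 * \sum_e (e \in Y :\: A) * (src e \in K).
    rewrite sum_in_K big_distrr; apply eq_bigr => e _.
    case He: (e \in Y :\: A) => /=; last by [].
    have : e \in compl A by move: He; rewrite /compl !inE => /andP[].
    move/(comp_edge HK) => ->; by case: (tgt e \in K).
  by move: oK; rewrite -s1 s2 s3 oddD oddM /= addbF.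
have oB : odd (\sum_(v in K) d (A :&: B) v).
  by apply: par => v vK; case: (Hdeg v vK).
have oC : odd (\sum_(v in K) d (A :&: C) v).
  by apply: par => v vK; case: (Hdeg v vK).
have vtx : forall v, v \in K -> d (Ei A B C 0) v =
    d (A :&: B) v + d (A :&: C) v + d ((B :&: C) :\: A) v.
  move=> v vK; have [dA dB dC] := Hdeg v vK.
  have : d (Ei A B C 0) v + d A v + d B v + d C v =
      d setT v + d (A :&: B) v + d (A :&: C) v + d ((B :&: C) :\: A) v.
    rewrite !degE -!big_split; apply eq_bigr => e _; rewrite /Ei !inE.
    by case: (e \in A); case: (e \in B); case: (e \in C) => /=; lia.
  rewrite cub dA dB dC; lia.
have sumV : 2 * #|X| = \sum_(v in K) d (A :&: B) v
    + \sum_(v in K) d (A :&: C) v + \sum_(v in K) d ((B :&: C) :\: A) v.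
  by rewrite -sumE0 -!big_split; apply eq_bigr => v vK; rewrite vtx.
case: (ltngtP #|X| 1) => [lt1 | gt1 | eq1].
- have H0 : \sum_(v in K) d (A :&: B) v = 0 by lia.
  by rewrite H0 in oB.
- apply: leq_trans gt1 _.
  rewrite (_ : #|X| = \sum_(e | (e \in Ei A B C 0) && (src e \in K)) 1);
    last by rewrite -sum1_card; apply eq_bigl => e; rewrite inE.
  by apply leq_sum => e _; rewrite /omega; case: tight.
- move/eqP: (eq1) => /cards1P [e0 X1].
  have He0 : e0 \in X by rewrite X1 set11.
  move: (He0); rewrite inE => /andP[e0E srcK].
  have tgtK : tgt e0 \in K by rewrite -(comp_edge HK (E0A _ e0E)).
  have odd12 : forall n, odd n -> n <= 2 -> n = 1 by case=> [|[|[|n]]].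
  have HB1 := odd12 _ oB ltac:(lia).
  have HC1 := odd12 _ oC ltac:(lia).
  have R0 : \sum_(v in K) d ((B :&: C) :\: A) v = 0 by lia.
  have nux := nl e0.
  have s0 := @sum_ge_two _ (fun v => v \in K) (fun v => d (Ei A B C 0) v) _ _ srcK tgtK nux.
  have sb := @sum_ge_two _ (fun v => v \in K) (fun v => d (A :&: B) v) _ _ srcK tgtK nux.
  have sc := @sum_ge_two _ (fun v => v \in K) (fun v => d (A :&: C) v) _ _ srcK tgtK nux.
  have sr := @sum_ge_two _ (fun v => v \in K) (fun v => d ((B :&: C) :\: A) v) _ _ srcK tgtK nux.
  rewrite /= in s0 sb sc sr.
  have du : 1 <= d (Ei A B C 0) (src e0).
    rewrite degE; apply: leq_trans _
      (@sum_ge_term _ xpredT (fun e => (e \in Ei A B C 0) * w e (src e0)) e0 isT).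
    by rewrite /= e0E /w eqxx.
  have dx : 1 <= d (Ei A B C 0) (tgt e0).
    rewrite degE; apply: leq_trans _
      (@sum_ge_term _ xpredT (fun e => (e \in Ei A B C 0) * w e (tgt e0)) e0 isT).
    by rewrite /= e0E /w eqxx addn1.
  have vu := vtx _ srcK; have vx := vtx _ tgtK.
  have T : tight A B C e0.
    rewrite /tight.
    have [[-> [-> [-> [-> [-> ->]]]]] | [-> [-> [-> [-> [-> ->]]]]]] :
      (d (A :&: B) (src e0) = 1 /\ d (A :&: C) (src e0) = 0
       /\ d ((B :&: C) :\: A) (src e0) = 0 /\ d (A :&: B) (tgt e0) = 0
       /\ d (A :&: C) (tgt e0) = 1 /\ d ((B :&: C) :\: A) (tgt e0) = 0)
      \/ (d (A :&: B) (src e0) = 0 /\ d (A :&: C) (src e0) = 1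
       /\ d ((B :&: C) :\: A) (src e0) = 0 /\ d (A :&: B) (tgt e0) = 1
       /\ d (A :&: C) (tgt e0) = 0 /\ d ((B :&: C) :\: A) (tgt e0) = 0)
      by lia.
    + by [].
    + by [].
  have PX : forall e, ((e \in Ei A B C 0) && (src e \in K)) = (e == e0).
    by move=> e; rewrite -in_set1 -X1 /X !inE.
  by rewrite (big_pred1 e0 PX) /omega T.
Qed.

Lemma PN_bound A B C : cubic src tgt -> (forall e, src e != tgt e) ->
  2 * #|[set K in components src tgt (compl A) | odd #|K| &&
          [forall v in K, [&& d A v == 1, d B v == 1 & d C v == 1]]]|
  <= \sum_(e in Ei A B C 0) omega A B C e.
Proof.
move=> cub nl.
set P := [set K in _ | _].
apply: (@leq_trans (\sum_(K in P)
    \sum_(e | (e \in Ei A B C 0) && (src e \in K)) omega A B C e)).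
  rewrite mulnC -sum_nat_const; apply leq_sum => K.
  rewrite inE => /andP[HK /andP[oK /forall_inP Hall]].
  apply comp_bound => // v vK.
  by have /and3P[/eqP ? /eqP ? /eqP ?] := Hall v vK.
under eq_bigr => K _ do rewrite big_mkcondr.
rewrite exchange_big /=; apply leq_sum => e _.
apply: (@leq_trans (\sum_K (if K == [set z | connect (adj src tgt (compl A)) (src e) z]
                           then omega A B C e else 0))).
  rewrite big_mkcond /=; apply leq_sum => K _.
  case KP: (K \in P) => //; case sK: (src e \in K) => //.
  move: KP; rewrite inE => /andP[HK _].
  by rewrite -(comp_mem HK sK) eqxx.
by rewrite -big_mkcond big_pred1_eq.
Qed.

Lemma split_odd A B C (JV : {set V}) :
  (forall v, v \notin JV -> [&& d A v == 1, d B v == 1 & d C v == 1]) ->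
  odd_comps src tgt (compl A) <= #|JV| +
    #|[set K in components src tgt (compl A) | odd #|K| &&
          [forall v in K, [&& d A v == 1, d B v == 1 & d C v == 1]]]|.
Proof.
move=> HJ; rewrite /odd_comps -(cardsID [set K : {set V} | [exists v in K, v \in JV]]).
apply: leq_add.
- apply: (leq_trans _ (leq_imset_card
     (fun v => [set z | connect (adj src tgt (compl A)) v z]) JV)).
  apply: subset_leq_card; apply/subsetP => K.
  rewrite !inE => /andP[/andP[HK _] /exists_inP[v vK vJ]].
  by apply/imsetP; exists v => //; exact: comp_mem HK vK.
- apply: subset_leq_card; apply/subsetP => K.
  rewrite !inE => /andP[nE /andP[HK oK]].
  rewrite HK oK /=; apply/forall_inP => v vK; apply: HJ.
  by apply/negP => vJ; move/negP: nE; apply; apply/exists_inP; exists v.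
Qed.

End G.

Theorem theorem2p3 (V E : finType) (src tgt : E -> V)
    (J1 J2 J3 : {set E}) :
  cubic src tgt -> bridgeless src tgt ->
  is_join src tgt J1 -> is_join src tgt J2 -> is_join src tgt J3 ->
  odd_comps src tgt (compl J1) + odd_comps src tgt (compl J2)
    + odd_comps src tgt (compl J3)
  <= 2 * #|Ei J1 J2 J3 0|
     + 3 * (nJ src tgt J1 + nJ src tgt J2 + nJ src tgt J3).
Proof.
move=> cub br j1 j2 j3.
have nl := noloop cub br.
set JV := [set v | (deg src tgt J1 v == 3) || (deg src tgt J2 v == 3)
                   || (deg src tgt J3 v == 3)].
have deg1 : forall v, v \notin JV ->
    [/\ deg src tgt J1 v = 1, deg src tgt J2 v = 1 & deg src tgt J3 v = 1].
  move=> v; rewrite inE !negb_or => /andP[/andP[a b] c]; split.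
  - by case: (deg13 v cub j1) => // h; rewrite h in a.
  - by case: (deg13 v cub j2) => // h; rewrite h in b.
  - by case: (deg13 v cub j3) => // h; rewrite h in c.
have sp1 := @split_odd _ _ src tgt J1 J2 J3 JV
  ltac:(by move=> v /deg1 [-> -> ->]).
have sp2 := @split_odd _ _ src tgt J2 J1 J3 JV
  ltac:(by move=> v /deg1 [-> -> ->]).
have sp3 := @split_odd _ _ src tgt J3 J1 J2 JV
  ltac:(by move=> v /deg1 [-> -> ->]).
have pn1 := PN_bound J1 J2 J3 cub nl.
have pn2 := PN_bound J2 J1 J3 cub nl.
have pn3 := PN_bound J3 J1 J2 cub nl.
have E2 : Ei J2 J1 J3 0 = Ei J1 J2 J3 0.
  apply/setP => e; rewrite !inE.
  by case: (e \in J1); case: (e \in J2); case: (e \in J3).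
have E3 : Ei J3 J1 J2 0 = Ei J1 J2 J3 0.
  apply/setP => e; rewrite !inE.
  by case: (e \in J1); case: (e \in J2); case: (e \in J3).
rewrite E2 in pn2; rewrite E3 in pn3.
have sum4 : \sum_(e in Ei J1 J2 J3 0) omega src tgt J1 J2 J3 e
          + \sum_(e in Ei J1 J2 J3 0) omega src tgt J2 J1 J3 e
          + \sum_(e in Ei J1 J2 J3 0) omega src tgt J3 J1 J2 e
          <= #|Ei J1 J2 J3 0| * 4.
  rewrite -!big_split -sum_nat_const /=; apply leq_sum => e _.
  have := tight_once src tgt J1 J2 J3 e; rewrite /omega.
  by case: tight; case: tight; case: tight.
have JVc : #|JV| <= nJ src tgt J1 + nJ src tgt J2 + nJ src tgt J3.
  rewrite /nJ (_ : JV = [set v | deg src tgt J1 v == 3]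
       :|: [set v | deg src tgt J2 v == 3] :|: [set v | deg src tgt J3 v == 3]).
    rewrite !cardsU; lia.
  by apply/setP => v; rewrite !inE.
lia.
Qed.
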